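(* Let $0\le c<\sqrt2-1$, let $K\ge1$ be an integer, let $t$ be a positive integer such that $R=(1+c)t$ is an integer with $R\ge10$, and let $L=R^{2K+1}$. For $l\in[K]$ with $cR^{K-l}$ an integer, define \[g_l=\big(1_{R^{K+1+l},R^{K-l}}\,2_{R^{K+1+l},R^{K-l}}\big)^{L/R^{K+1+l}}.\] Let $1\le i<j\le K$ with $cR^{K-i}$ and $cR^{K-j}$ integers, and let $s$ be a common subsequence of $g_i$ and $g_j$. Then \[\left(1+\frac2R\right)\operatorname{span}_{g_i}s+\operatorname{span}_{g_j}s\ \ge\ (3+c)\operatorname{len} s-\frac{10L}{R}.\]
   Context: Words are over $\{1,2\}$; $\alpha^m$ is letter $\alpha$ repeated $m$ times and $u^m$ is $m$ concatenated copies of word $u$. For positive integers $M,a$ with $ca$ and $M/((1+c)a)$ integers, $1_{M,a}=(1^a2^{ca})^{M/((1+c)a)}$ and $2_{M,a}=(2^a1^{ca})^{M/((1+c)a)}$. (The paper adopts the convention that all such lengths are integers.) Symbols are distinguishable positions; a common subsequence of $u_1,u_2$ is a pair of subsequences of $u_1,u_2$ equal as words, $\operatorname{len} s$ its length; $\operatorname{span}_{u}s$ is the length of the shortest block of consecutive symbols of $u$ containing the part of $s$ lying in $u$. *)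

(* Defs.v *)
From mathcomp Require Import all_boot all_order all_algebra.
From mathcomp Require Import reals.
Set Implicit Arguments. Unset Strict Implicit. Unset Printing Implicit Defensive.

(* Words over {1,2} are represented as seq nat (letters 1 and 2). *)

Definition blk (x y a b : nat) : seq nat := nseq a x ++ nseq b y.

(* 1_{M,a} = (1^a 2^{ca})^{M/((1+c)a)}, with b = ca (an integer), so (1+c)a = a+b. *)
Definition word1 (M a b : nat) : seq nat := flatten (nseq (M %/ (a + b)) (blk 1 2 a b)).
Definition word2 (M a b : nat) : seq nat := flatten (nseq (M %/ (a + b)) (blk 2 1 a b)).

(* g_l = (1_{R^{K+1+l},R^{K-l}} 2_{R^{K+1+l},R^{K-l}})^{L/R^{K+1+l}},
   where b = c R^{K-l} (assumed integer) and L = R^{2K+1}. *)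
Definition gword (r K l b : nat) : seq nat :=
  let M := r ^ (K + 1 + l) in
  let a := r ^ (K - l) in
  flatten (nseq (r ^ (2 * K + 1) %/ M) (word1 M a b ++ word2 M a b)).

Definition common_subseq (u1 u2 : seq nat) (I J : seq nat) : Prop :=
  [/\ sorted ltn I, sorted ltn J, size I = size J &
      [/\ all (fun k => k < size u1) I, all (fun k => k < size u2) J &
           map (nth 0 u1) I = map (nth 0 u2) J]].

Definition wspan (I : seq nat) : nat :=
  if I is x :: I' then (last x I' - x).+1 else 0.

(* Main.v *)
Require Import Defs.
From mathcomp Require Import all_boot all_order all_algebra.
From mathcomp Require Import reals.
From mathcomp Require Import zify ring lra.
Set Implicit Arguments. Unset Strict Implicit. Unset Printing Implicit Defensive.

Lemma take_fn (W : seq nat) n y : 0 < size W -> y <= n * size W ->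
  take y (flatten (nseq n W)) = flatten (nseq (y %/ size W) W) ++ take (y %% size W) W.
Proof.
move=> Hs; elim: n y => [|n IH] y Hy.
  move: Hy; rewrite mul0n leqn0 => /eqP ->.
  by rewrite /= div0n mod0n take0.
rewrite /= take_cat.
case: ltnP => Hl.
  by rewrite divn_small // modn_small.
have -> : y = (y - size W) + size W by rewrite subnK.
rewrite addnK IH; last by move: Hy; rewrite mulSn; lia.
rewrite modnDr divnDr ?dvdnn // divnn Hs addn1 /=.
by rewrite catA.
Qed.

Lemma drop_fn (W : seq nat) n k : drop (k * size W) (flatten (nseq n W)) = flatten (nseq (n - k) W).
Proof.
elim: k n => [|k IH] n; first by rewrite mul0n drop0 subn0.
case: n => [|n]; first by [].
by rewrite /= drop_cat mulSn ltnNge leq_addr /= addKn IH subSS.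
Qed.

Lemma nth_fn (W : seq nat) n p : p < n * size W ->
  nth 0 (flatten (nseq n W)) p = nth 0 W (p %% size W).
Proof.
elim: n p => [|n IH] p; first by rewrite mul0n.
rewrite mulSn /= nth_cat => Hp.
case: ltnP => Hl; first by rewrite modn_small.
have -> : p = (p - size W) + size W by rewrite subnK.
by rewrite addnK modnDr IH //; lia.
Qed.

Lemma count_fn (W : seq nat) n P : count P (flatten (nseq n W)) = n * count P W.
Proof. by elim: n => [|n IH] //=; rewrite count_cat IH mulSn. Qed.

Lemma size_fn (W : seq nat) n : size (flatten (nseq n W)) = n * size W.
Proof. by elim: n => [|n IH] //=; rewrite size_cat IH mulSn. Qed.

Lemma size_blk x y a b : size (blk x y a b) = a + b.
Proof. by rewrite /blk size_cat !size_nseq. Qed.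

Lemma nth_blk x y a b e : e < a + b -> nth 0 (blk x y a b) e = if e < a then x else y.
Proof.
move=> He; rewrite /blk nth_cat size_nseq; case: ltnP => H; first by rewrite nth_nseq H.
by rewrite nth_nseq; case: ltnP => //; lia.
Qed.

Lemma count_nseq' (P : pred nat) n x : count P (nseq n x) = if P x then n else 0.
Proof. by elim: n => [|n IH] /=; [case: (P x) | rewrite IH; case: (P x)]. Qed.

Lemma count_blk x y a b : x != y ->
  count (pred1 x) (blk x y a b) = a /\ count (pred1 y) (blk x y a b) = b.
Proof.
move=> Hxy; have Hyx : y != x by rewrite eq_sym.
rewrite /blk !count_cat !count_nseq' /= !eqxx ?(negbTE Hyx) ?(negbTE Hxy).
split; lia.
Qed.

Lemma count_take_blk x y a b z : x != y -> z <= a + b ->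
  count (pred1 x) (take z (blk x y a b)) = minn z a /\
  count (pred1 y) (take z (blk x y a b)) = z - a.
Proof.
move=> Hxy Hz; have Hyx : y != x by rewrite eq_sym.
rewrite /blk take_cat size_nseq.
case: ltnP => H.
  rewrite take_nseq; last lia.
  rewrite !count_nseq' /= !eqxx ?(negbTE Hyx) ?(negbTE Hxy).
  split; lia.
rewrite take_nseq; last lia.
rewrite !count_cat !count_nseq' /= !eqxx ?(negbTE Hyx) ?(negbTE Hxy).
split; lia.
Qed.

Lemma count_step (s : seq nat) (P : pred nat) k : k < size s ->
  count P (take k.+1 s) = count P (take k s) + P (nth 0 s k).
Proof. by move=> Hk; rewrite (take_nth 0 Hk) -cats1 count_cat /= addn0. Qed.

Lemma count_take_mono (s : seq nat) (P : pred nat) m n : m <= n ->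
  count P (take m s) <= count P (take n s).
Proof.
move=> Hmn; have -> : n = m + (n - m) by rewrite subnKC.
by rewrite takeD count_cat leq_addr.
Qed.

Lemma count_take_lt (s : seq nat) (P : pred nat) k k' : k < k' -> k' < size s ->
  count P (take k.+1 s) + P (nth 0 s k') <= count P (take k'.+1 s).
Proof.
move=> H1 H2; rewrite (count_step P H2) leq_add2r; exact: count_take_mono.
Qed.

Definition Gw N n a b :=
  flatten (nseq N (word1 (n * (a + b)) a b ++ word2 (n * (a + b)) a b)).

Definition letter n a b p :=
  if (~~ odd (p %/ (n * (a + b)))) == (p %% (a + b) < a) then 1 else 2.

Lemma size_w1 n a b : 0 < a -> size (word1 (n * (a + b)) a b) = n * (a + b).
Proof. by move=> Ha; rewrite /word1 size_fn size_blk mulnK //; lia. Qed.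

Lemma size_w2 n a b : 0 < a -> size (word2 (n * (a + b)) a b) = n * (a + b).
Proof. by move=> Ha; rewrite /word2 size_fn size_blk mulnK //; lia. Qed.

Lemma size_W n a b : 0 < a ->
  size (word1 (n * (a + b)) a b ++ word2 (n * (a + b)) a b) = n * (a + b) + n * (a + b).
Proof. by move=> Ha; rewrite size_cat size_w1 // size_w2. Qed.

Lemma size_G N n a b : 0 < a -> size (Gw N n a b) = N * (n * (a + b) + n * (a + b)).
Proof. by move=> Ha; rewrite /Gw size_fn size_W. Qed.

Lemma mod2M_lt p M : 0 < M -> (p %% (M + M) < M) = ~~ odd (p %/ M).
Proof.
move=> HM.
have E1 := divn_eq p M. have E2 := divn_eq (p %/ M) 2.
have Hl : p %% M < M by rewrite ltn_mod.
have Ho : p %/ M %% 2 < 2 by rewrite ltn_mod.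
have E : p %% (M + M) = (p %/ M %% 2) * M + p %% M.
  have E3 : p = (p %/ M %/ 2) * (M + M) + ((p %/ M %% 2) * M + p %% M).
    rewrite {1}E1 {1}E2; lia.
  rewrite {1}E3 modnMDl modn_small //.
  case: (p %/ M %% 2) Ho => [|[|]] //=; lia.
rewrite E; have := modn2 (p %/ M); case: (odd (p %/ M)) => /= ->.
  by rewrite mul1n ltnNge leq_addr.
by rewrite mul0n add0n.
Qed.

Lemma nth_G N n a b p : 0 < a -> p < size (Gw N n a b) ->
  nth 0 (Gw N n a b) p = letter n a b p.
Proof.
move=> Ha; rewrite size_G // => Hp.
rewrite /Gw nth_fn ?size_W // nth_cat size_w1 //.
set M := n * (a + b).
have HM : 0 < M by rewrite /M; case: n Hp @M => [|n]; [rewrite !mul0n; lia | lia].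
have Hw : p %% (M + M) < M + M by rewrite ltn_mod; lia.
rewrite /letter -/M -(mod2M_lt p HM).
have Hd : (a + b) %| M + M by rewrite /M -mulnDl dvdn_mull.
have Hmod : p %% (M + M) %% (a + b) = p %% (a + b) by rewrite -(modn_dvdm p Hd).
case: ltnP => H.
  rewrite /word1 -/M /M mulnK; last lia.
  rewrite nth_fn ?size_blk; last by rewrite -/M.
  rewrite Hmod nth_blk; last by rewrite ltn_mod; lia.
  by case: ltnP.
rewrite /word2 /M mulnK; last lia.
rewrite nth_fn ?size_blk; last by rewrite -/M; lia.
have -> : (p %% (M + M) - M) %% (a + b) = p %% (a + b).
  rewrite -Hmod; set w := p %% (M + M).
  have Ew : w = n * (a + b) + (w - M) by rewrite /M; lia.
  by rewrite {2}Ew modnMDl.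
rewrite nth_blk; last by rewrite ltn_mod; lia.
by case: ltnP.
Qed.

Lemma letter12 n a b p : (letter n a b p == 1) || (letter n a b p == 2).
Proof. by rewrite /letter; case: ifP. Qed.

Lemma count12 N n a b z : 0 < a -> z <= size (Gw N n a b) ->
  count (pred1 1) (take z (Gw N n a b)) + count (pred1 2) (take z (Gw N n a b)) = z.
Proof.
move=> Ha; elim: z => [|z IH] Hz; first by rewrite take0.
rewrite !count_step //; have := IH (ltnW Hz).
rewrite nth_G //; case/orP: (letter12 n a b z) => /eqP -> /=; lia.
Qed.

Lemma Dbound N n a b z : 0 < a -> z <= size (Gw N n a b) ->
  count (pred1 1) (take z (Gw N n a b)) <= count (pred1 2) (take z (Gw N n a b)) + n * (a + b) /\
  count (pred1 2) (take z (Gw N n a b)) <= count (pred1 1) (take z (Gw N n a b)) + n * (a + b).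
Proof.
move=> Ha Hz.
set M := n * (a + b).
have HW := size_W n b Ha.
have [Hz0|HM] : z = 0 \/ 0 < M.
  move: Hz; rewrite size_G // -/M; case: (posnP M) => [->|]; [rewrite addn0 muln0; lia|by right].
  by rewrite Hz0 take0 /=.
rewrite /Gw take_fn ?HW; [|lia|by move: Hz; rewrite size_G].
rewrite !count_cat !count_fn.
set w := z %% _.
have Hw : w < M + M by rewrite /w ltn_mod; lia.
have C1 : count (pred1 1) (word1 M a b) = n * a.
  by rewrite /word1 /M mulnK ?count_fn; [case: (count_blk a b (isT : 1 != 2)) => -> _|lia].
have C2 : count (pred1 2) (word1 M a b) = n * b.
  by rewrite /word1 /M mulnK ?count_fn; [case: (count_blk a b (isT : 1 != 2)) => _ ->|lia].
have C3 : count (pred1 1) (word2 M a b) = n * b.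
  by rewrite /word2 /M mulnK ?count_fn; [case: (count_blk a b (isT : 2 != 1)) => _ ->|lia].
have C4 : count (pred1 2) (word2 M a b) = n * a.
  by rewrite /word2 /M mulnK ?count_fn; [case: (count_blk a b (isT : 2 != 1)) => -> _|lia].
rewrite !count_cat C1 C2 C3 C4 take_cat size_w1 // -/M.
have -> : n * a + n * b = M by rewrite /M; lia.
case: ltnP => Hl.
  have S1 := count_size (pred1 1) (take w (word1 M a b)).
  have S2 := count_size (pred1 2) (take w (word1 M a b)).
  rewrite size_take_min in S1 S2; lia.
rewrite !count_cat C1 C2.
have := cat_take_drop (w - size (word1 M a b)) (word2 M a b).
rewrite size_w1 // -/M => E.
have D1 := congr1 (count (pred1 1)) E; have D2 := congr1 (count (pred1 2)) E.
rewrite count_cat C3 in D1; rewrite count_cat C4 in D2.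
have S1 := count_size (pred1 1) (drop (w - M) (word2 M a b)).
have S2 := count_size (pred1 2) (drop (w - M) (word2 M a b)).
rewrite size_drop size_w2 // -/M in S1 S2.
lia.
Qed.

Lemma region_bounds M q : 0 < M -> q %/ M * M <= q /\ q < q %/ M * M + M.
Proof. move=> HM; split; first exact: leq_divM. by have := ltn_ceil q HM; rewrite mulSn; lia. Qed.

Lemma Vcount N n a b q : 0 < a -> q < size (Gw N n a b) ->
  let M := n * (a + b) in let m := q %/ M in let y := q.+1 - m * M in
  let s := take y (drop (m * M) (Gw N n a b)) in
  count (pred1 (if odd m then 2 else 1)) s = y %/ (a + b) * a + minn (y %% (a + b)) a /\
  count (pred1 (if odd m then 1 else 2)) s = y %/ (a + b) * b + (y %% (a + b) - a).
Proof.
move=> Ha Hq M m y s.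
have HM : 0 < M.
  move: Hq; rewrite size_G // -/M; case: (posnP M) => [->|] //; rewrite addn0 muln0 //.
have [Hr1 Hr2] := region_bounds q HM.
have Hy : y <= M by rewrite /y /m; lia.
have Hm : m < N + N.
  rewrite /m ltn_divLR // mulnDl; move: Hq; rewrite size_G //; lia.
have Em : m * M = (m %/ 2) * size (word1 M a b ++ word2 M a b) + odd m * M.
  rewrite size_W // -/M; have := divn_eq m 2; rewrite modn2 => E; rewrite {1}E; lia.
have HQ : m %/ 2 < N by rewrite ltn_divLR //; lia.
have Hs : s = take y (drop (odd m * M) (word1 M a b ++ word2 M a b ++ flatten (nseq (N - m %/ 2).-1 (word1 M a b ++ word2 M a b)))).
  rewrite /s Em addnC -drop_drop /Gw -/M drop_fn.
  have -> : N - m %/ 2 = (N - m %/ 2).-1.+1 by lia.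
  by rewrite /= catA.
have Hab : 0 < a + b by lia.
have Hz : y %% (a + b) <= a + b by apply: ltnW; rewrite ltn_mod.
rewrite Hs; have [Hodd|Hev] := boolP (odd m).
  rewrite mul1n drop_size_cat ?size_w1 // takel_cat ?size_w2 //.
  rewrite /word2 /M mulnK // take_fn ?size_blk //.
  rewrite !count_cat !count_fn.
  have [A1 A2] := count_blk a b (isT : 2 != 1).
  have [B1 B2] := count_take_blk (isT : 2 != 1) Hz.
  by rewrite A1 A2 B1 B2 mulnC [_ * b]mulnC.
rewrite mul0n drop0 takel_cat ?size_w1 //.
rewrite /word1 /M mulnK // take_fn ?size_blk //.
rewrite !count_cat !count_fn.
have [A1 A2] := count_blk a b (isT : 1 != 2).
have [B1 B2] := count_take_blk (isT : 1 != 2) Hz.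
by rewrite A1 A2 B1 B2 mulnC [_ * b]mulnC.
Qed.

Definition gidx a b p := 2 * (p %/ (a + b)) + (a <= p %% (a + b)).

Lemma gidx_mono a b p p' : 0 < a + b -> p <= p' -> gidx a b p <= gidx a b p'.
Proof.
move=> Hab Hp; rewrite /gidx.
have E := divn_eq p (a + b); have E' := divn_eq p' (a + b).
have Hd : p %/ (a + b) <= p' %/ (a + b) by apply: leq_div2r.
have He := ltn_pmod p Hab; have He' := ltn_pmod p' Hab.
case: (ltngtP (p %/ (a + b)) (p' %/ (a + b))) Hd => // [Hlt|Heq] _.
  case: (a <= _); case: (a <= _); lia.
rewrite Heq in E *.
have : p %% (a + b) <= p' %% (a + b) by lia.
move=> H; rewrite leq_add2l; case: (leqP a (p %% (a+b))) => //= H2.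
by rewrite (leq_trans H2 H).
Qed.

Lemma gidx_change N n a b p p' : 0 < a -> p < p' -> p' < size (Gw N n a b) ->
  nth 0 (Gw N n a b) p != nth 0 (Gw N n a b) p' -> gidx a b p < gidx a b p'.
Proof.
move=> Ha Hp Hp'; rewrite !nth_G //; last by lia.
have Hab : 0 < a + b by lia.
rewrite /gidx /letter.
have E := divn_eq p (a + b); have E' := divn_eq p' (a + b).
have Hd : p %/ (a + b) <= p' %/ (a + b) by apply: leq_div2r; lia.
have He := ltn_pmod p Hab; have He' := ltn_pmod p' Hab.
case: (ltngtP (p %/ (a + b)) (p' %/ (a + b))) Hd => // [Hlt|Heq] _.
  move=> _; case: (a <= _); case: (a <= _); lia.
have HM : p %/ (n * (a + b)) = p' %/ (n * (a + b)) by rewrite mulnC !divnMA Heq.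
rewrite HM Heq.
rewrite Heq in E.
have H : p %% (a + b) < p' %% (a + b) by lia.
case: (ltnP (p %% (a + b)) a) => H1; case: (ltnP (p' %% (a + b)) a) => H2 //=.
- by rewrite eqxx.
- move=> _; lia.
- lia.
- by rewrite eqxx.
Qed.

Import Order.TTheory GRing.Theory Num.Theory.
Local Open Scope ring_scope.

Definition cntR (R : realType) y (s : seq nat) : R := (count (pred1 y) s)%:R.
Definition tau M' q := if odd (q %/ M') then 2%N else 1%N.
Definition Cq (R : realType) v M' x q : R :=
  cntR R x (take (q.+1 - q %/ M' * M') (drop (q %/ M' * M') v)).
Definition Fx (R : realType) (c : R) M' x q : R :=
  if x == tau M' q then 1 + c else (1 + c) / c.

Lemma vb_tau_real (R : realType) (c a' k z base Q : R) : 0 <= c -> 0 <= z -> z < a' + c * a' ->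
  Q = base + k * (a' + c * a') + z ->
  (z <= a' -> Q <= base + (1 + c) * (k * a' + z) <= Q + c * a') /\
  (a' <= z -> Q <= base + (1 + c) * (k * a' + a') <= Q + c * a').
Proof.
move=> Hc Hz Hz2 EQ; split=> H.
  have : c * z <= c * a' by rewrite ler_wpM2l.
  have H3 : 0 <= c * z by rewrite mulr_ge0.
  move=> H2; apply/andP; split; lra.
apply/andP; split; lra.
Qed.

Lemma vb_bar_real (R : realType) (c a' k z base Q : R) : 0 < c -> 0 <= z -> z < a' + c * a' ->
  Q = base + k * (a' + c * a') + z ->
  (z <= a' -> Q - a' <= base + (1 + c) / c * (k * (c * a') + 0) <= Q) /\
  (a' <= z -> Q - a' <= base + (1 + c) / c * (k * (c * a') + (z - a')) <= Q).
Proof.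
move=> Hc Hz Hz2 EQ.
have Fc : (1 + c) / c * c = 1 + c by rewrite divfK // gt_eqF.
have E1 : (1 + c) / c * (k * (c * a')) = (1 + c) * k * a'.
  have -> : (1 + c) / c * (k * (c * a')) = ((1 + c) / c * c) * k * a' by ring.
  by rewrite Fc.
split=> H.
  rewrite addr0 E1; apply/andP; split; lra.
rewrite mulrDr E1.
set X := (1 + c) / c * (z - a').
have EX : c * X = (1 + c) * (z - a') by rewrite /X mulrA [c * _]mulrC Fc.
have H1 : X <= z by rewrite -(ler_pM2l Hc) EX; lra.
have H2 : z - a' <= X by rewrite -(ler_pM2l Hc) EX; nra.
apply/andP; split; lra.
Qed.

Lemma VB (R : realType) (c : R) N' n' a' b' q x :
  (0 < a')%N -> 0 <= c -> b'%:R = c * a'%:R -> (q < size (Gw N' n' a' b'))%N ->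
  (x == 1%N) || (x == 2%N) ->
  let M' := (n' * (a' + b'))%N in
  let V := (q %/ M' * M')%:R + Fx c M' x q * Cq R (Gw N' n' a' b') M' x q in
  (x == tau M' q -> (q.+1)%:R <= V <= (q.+1)%:R + c * a'%:R) /\
  (x != tau M' q -> 0 < c -> (q.+1)%:R - a'%:R <= V <= (q.+1)%:R).
Proof.
move=> Ha' Hc Hb' Hq Hx M' V.
have [C1 C2] := Vcount Ha' Hq; rewrite -/M' in C1 C2.
set m := (q %/ M')%N in C1 C2.
set y := (q.+1 - m * M')%N in C1 C2.
have HM : (0 < M')%N.
  move: Hq; rewrite size_G // -/M'; case: (posnP M') => [->|] //; rewrite addn0 muln0 //.
have [Hr1 Hr2] := region_bounds q HM.
have Ey : (m * M' + y)%N = q.+1 by rewrite /y /m; lia.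
have Ey2 := divn_eq y (a' + b').
set k := (y %/ (a' + b'))%N in C1 C2 Ey2.
set z := (y %% (a' + b'))%N in C1 C2 Ey2.
have Hz : (z < a' + b')%N by rewrite /z ltn_mod; lia.
have Eq : (q.+1)%:R = (m * M')%:R + k%:R * (a'%:R + b'%:R) + z%:R :> R.
  by rewrite -Ey Ey2 !(natrD, natrM); ring.
rewrite /V /Fx /Cq /cntR -/m -/y.
have Hzb : z%:R < a'%:R + c * a'%:R :> R by rewrite -Hb' -natrD ltr_nat.
have Hz0 : 0 <= z%:R :> R by [].
have Eq' : (q.+1)%:R = (m * M')%:R + k%:R * (a'%:R + c * a'%:R) + z%:R :> R by rewrite Eq Hb'.
split => Ht.
  rewrite Ht.
  have -> : x = tau M' q by apply/eqP.
  have [T1 T2] := vb_tau_real Hc Hz0 Hzb Eq'.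
  rewrite /tau -/m; move: C1; case: (odd m) => ->;
  case: (leqP z a') => Hza; rewrite natrD (natrM R k a').
  - by apply: T1; rewrite ler_nat.
  - by apply: T2; rewrite ler_nat ltnW.
  - by apply: T1; rewrite ler_nat.
  - by apply: T2; rewrite ler_nat ltnW.
move=> Hcp.
have Hx2 : x = if odd m then 1%N else 2%N.
  move: Ht Hx; rewrite /tau -/m; case: (odd m) => Ht /orP [] /eqP Ex; by move: Ht; rewrite Ex.
rewrite (negbTE Ht) Hx2.
have [T1 T2] := vb_bar_real Hcp Hz0 Hzb Eq'.
rewrite addr0 in T1.
move: C2; case: (odd m) => -> ;
case: (leqP z a') => Hza; rewrite natrD (natrM R k b') Hb'.
- have -> : (z - a' = 0)%N by apply/eqP; rewrite subn_eq0.
  rewrite addr0; apply: T1; rewrite ler_nat; exact: Hza.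
- rewrite natrB; last exact: ltnW.
  apply: T2; rewrite ler_nat; exact: ltnW.
- have -> : (z - a' = 0)%N by apply/eqP; rewrite subn_eq0.
  rewrite addr0; apply: T1; rewrite ler_nat; exact: Hza.
- rewrite natrB; last exact: ltnW.
  apply: T2; rewrite ler_nat; exact: ltnW.
Qed.

Definition Dp (R : realType) u p : R := cntR R 1 (take p.+1 u) - cntR R 2 (take p.+1 u).
Definition sgn (R : realType) M' q : R := if odd (q %/ M')%N then -1 else 1.
Definition Ufun (R : realType) u M' p q : R := (p.+1)%:R + sgn R M' q * Dp R u p.

Lemma LU (R : realType) N n a b M' p p' q q' : (0 < a)%N -> (p < p')%N ->
  (p' < size (Gw N n a b))%N ->
  Ufun R (Gw N n a b) M' p' q' - Ufun R (Gw N n a b) M' p q >=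
  (if nth 0 (Gw N n a b) p' == tau M' q' then 2 else 0) -
  (if odd (q %/ M')%N == odd (q' %/ M')%N then 0 else 2 * (n * (a + b))%:R).
Proof.
move=> Ha Hp Hp'.
set u := Gw N n a b.
have S1 := count12 Ha (ltnW (leq_ltn_trans Hp Hp')).
have S2 := count12 Ha Hp'.
have [D1 D2] := Dbound Ha (ltnW (leq_ltn_trans Hp Hp')).
have T1 := count_take_lt (pred1 1%N) Hp Hp'.
have T2 := count_take_lt (pred1 2%N) Hp Hp'.
rewrite -/u in S1 S2 D1 D2 T1 T2.
move: S1 S2 D1 D2 T1 T2.
rewrite /Ufun /Dp /cntR /sgn /tau.
set A1 := count _ (take p.+1 u); set A2 := count _ (take p.+1 u).
set B1 := count _ (take p'.+1 u); set B2 := count _ (take p'.+1 u).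
rewrite -/u (nth_G Ha Hp').
set x := letter _ _ _ _.
have : (x == 1%N) || (x == 2%N) by apply: letter12.
case/orP => /eqP Ex; rewrite Ex /= => S1 S2 D1 D2 T1 T2.
- have S1' : (A1%:R + A2%:R = (p.+1)%:R :> R) by rewrite -natrD S1.
  have S2' : (B1%:R + B2%:R = (p'.+1)%:R :> R) by rewrite -natrD S2.
  have D1' : (A1%:R <= A2%:R + (n * (a + b))%:R :> R) by rewrite -natrD ler_nat.
  have D2' : (A2%:R <= A1%:R + (n * (a + b))%:R :> R) by rewrite -natrD ler_nat.
  have T1' : (A1%:R + 1 <= B1%:R :> R) by rewrite -(natrD R A1 1) ler_nat.
  have T2' : (A2%:R <= B2%:R :> R) by rewrite ler_nat; lia.
  case: (odd (q %/ M')); case: (odd (q' %/ M')) => /=; lra.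
- have S1' : (A1%:R + A2%:R = (p.+1)%:R :> R) by rewrite -natrD S1.
  have S2' : (B1%:R + B2%:R = (p'.+1)%:R :> R) by rewrite -natrD S2.
  have D1' : (A1%:R <= A2%:R + (n * (a + b))%:R :> R) by rewrite -natrD ler_nat.
  have D2' : (A2%:R <= A1%:R + (n * (a + b))%:R :> R) by rewrite -natrD ler_nat.
  have T1' : (A1%:R <= B1%:R :> R) by rewrite ler_nat; lia.
  have T2' : (A2%:R + 1 <= B2%:R :> R) by rewrite -(natrD R A2 1) ler_nat.
  case: (odd (q %/ M')); case: (odd (q' %/ M')) => /=; lra.
Qed.

Definition Gfun (R : realType) (c : R) a b a' p : R := (1 + c) * a'%:R * (gidx a b p)%:R.

Lemma LG (R : realType) (c : R) N n a b a' p p' : (0 < a)%N -> 0 <= c -> (p < p')%N ->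
  (p' < size (Gw N n a b))%N ->
  Gfun c a b a' p' - Gfun c a b a' p >=
  (if nth 0 (Gw N n a b) p == nth 0 (Gw N n a b) p' then 0 else (1 + c) * a'%:R).
Proof.
move=> Ha Hc Hp Hp'; rewrite /Gfun -mulrBr.
have Hw : 0 <= (1 + c) * a'%:R by rewrite mulr_ge0 //; lra.
case: eqP => Heq.
  rewrite mulr_ge0 // subr_ge0 ler_nat; apply: gidx_mono; lia.
rewrite -{1}[(1 + c) * a'%:R]mulr1 ler_wpM2l // lerBrDr -(natrD R 1) ler_nat add1n.
apply: (gidx_change Ha Hp Hp'); exact/eqP.
Qed.

Lemma letter_tau0 N' n' a' q : (0 < a')%N -> (q < size (Gw N' n' a' 0))%N ->
  nth 0 (Gw N' n' a' 0) q = tau (n' * (a' + 0))%N q.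
Proof.
move=> Ha Hq; rewrite (nth_G Ha Hq) /letter /tau addn0 ltn_mod Ha.
by case: (odd _).
Qed.

Lemma VUB (R : realType) (c : R) N' n' a' b' q x :
  (0 < a')%N -> 0 <= c -> b'%:R = c * a'%:R -> (q < size (Gw N' n' a' b'))%N ->
  (x == 1%N) || (x == 2%N) ->
  (q %/ (n' * (a' + b')) * (n' * (a' + b')))%:R + Fx c (n' * (a' + b')) x q * Cq R (Gw N' n' a' b') (n' * (a' + b')) x q <= (q.+1)%:R + c * a'%:R.
Proof.
move=> Ha Hc Hb Hq Hx; set M' := (n' * (a' + b'))%N.
have [V1 V2] := VB Ha Hc Hb Hq Hx.
rewrite -/M' in V1 V2.
have [Ht|Ht] := boolP (x == tau M' q).
  by case/andP: (V1 Ht) => _ H; exact: H.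
have [Hc0|Hcp] := eqVneq c 0.
  have HM : (0 < M')%N.
    move: Hq; rewrite size_G // -/M'; case: (posnP M') => [->|] //; rewrite addn0 muln0 //.
  have [Hr1 Hr2] := region_bounds q HM.
  rewrite /Fx (negbTE Ht) Hc0 invr0 mulr0 mul0r addr0 mul0r addr0 ler_nat.
  exact: leqW.
have Hcp' : 0 < c by rewrite lt_def Hcp Hc.
case/andP: (V2 Ht Hcp') => _ H; apply: (le_trans H).
rewrite lerDl; apply: mulr_ge0 => //.
Qed.

Lemma VLB (R : realType) (c : R) N' n' a' b' q x :
  (0 < a')%N -> 0 <= c -> b'%:R = c * a'%:R -> (q < size (Gw N' n' a' b'))%N ->
  (x == 1%N) || (x == 2%N) -> (x == tau (n' * (a' + b'))%N q) || (0 < c) ->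
  (q.+1)%:R - a'%:R <= (q %/ (n' * (a' + b')) * (n' * (a' + b')))%:R + Fx c (n' * (a' + b')) x q * Cq R (Gw N' n' a' b') (n' * (a' + b')) x q.
Proof.
move=> Ha Hc Hb Hq Hx Hor; set M' := (n' * (a' + b'))%N.
have [V1 V2] := VB Ha Hc Hb Hq Hx.
rewrite -/M' in V1 V2 Hor.
have [Ht|Ht] := boolP (x == tau M' q).
  case/andP: (V1 Ht) => H _; apply: le_trans H; rewrite lerBlDr lerDl //.
rewrite (negbTE Ht) /= in Hor.
by case/andP: (V2 Ht Hor) => H _; exact: H.
Qed.

Lemma Cq_step (R : realType) v M' q q' x : (0 < M')%N -> (q %/ M' = q' %/ M')%N -> (q < q')%N ->
  (q' < size v)%N -> Cq R v M' x q + (nth 0 v q' == x)%:R <= Cq R v M' x q'.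
Proof.
move=> HM Heq Hq Hq'.
have [Hr1 Hr2] := region_bounds q HM.
have [Hr1' Hr2'] := region_bounds q' HM.
rewrite /Cq /cntR -Heq -natrD ler_nat.
set r0 := (q %/ M' * M')%N.
have E1 : (q.+1 - r0 = (q - r0).+1)%N by rewrite /r0; lia.
have E2 : (q'.+1 - r0 = (q' - r0).+1)%N by rewrite /r0 Heq; lia.
rewrite E1 E2.
have -> : nth 0 v q' = nth 0 (drop r0 v) (q' - r0).
  by rewrite nth_drop subnKC // /r0 Heq.
apply: count_take_lt; first by rewrite /r0; lia.
by rewrite size_drop /r0 Heq; lia.
Qed.

Lemma Cq_pos (R : realType) v M' q x : (0 < M')%N -> (q < size v)%N ->
  (nth 0 v q == x)%:R <= Cq R v M' x q.
Proof.
move=> HM Hq.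
have [Hr1 Hr2] := region_bounds q HM.
rewrite /Cq /cntR ler_nat.
set r0 := (q %/ M' * M')%N.
have E1 : (q.+1 - r0 = (q - r0).+1)%N by rewrite /r0; lia.
have Hk : (q - r0 < size (drop r0 v))%N by rewrite size_drop /r0; lia.
rewrite E1 (count_step _ Hk).
by rewrite nth_drop subnKC // leq_addl.
Qed.

Definition Vfun (R : realType) (c : R) v M' q : R :=
  (q %/ M' * M')%:R + Fx c M' (nth 0 v q) q * Cq R v M' (nth 0 v q) q.

Lemma Fx_ge0 (R : realType) (c : R) M' x q : 0 <= c -> 0 <= Fx c M' x q.
Proof. move=> Hc; rewrite /Fx; case: ifP => _; [lra | apply: divr_ge0; lra]. Qed.

Lemma tau_or (R : realType) (c : R) N' n' a' b' q : (0 < a')%N -> 0 <= c -> b'%:R = c * a'%:R ->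
  (q < size (Gw N' n' a' b'))%N ->
  (nth 0 (Gw N' n' a' b') q == tau (n' * (a' + b'))%N q) || (0 < c).
Proof.
move=> Ha Hc Hb Hq.
have [Hc0|Hcp] := eqVneq c 0; last by rewrite lt_def Hcp Hc orbT.
have Hb0 : b' = 0%N by apply/eqP; rewrite -(eqr_nat R) Hb Hc0 mul0r.
subst b'; by rewrite letter_tau0 // eqxx.
Qed.

Lemma letter_v12 N' n' a' b' q : (0 < a')%N -> (q < size (Gw N' n' a' b'))%N ->
  (nth 0 (Gw N' n' a' b') q == 1%N) || (nth 0 (Gw N' n' a' b') q == 2%N).
Proof. by move=> Ha Hq; rewrite nth_G // letter12. Qed.

Lemma LV_same (R : realType) (c : R) N' n' a' b' q q' :
  (0 < a')%N -> 0 <= c -> b'%:R = c * a'%:R -> (q < q')%N -> (q' < size (Gw N' n' a' b'))%N ->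
  (q %/ (n' * (a' + b')) = q' %/ (n' * (a' + b')))%N ->
  Vfun c (Gw N' n' a' b') (n' * (a' + b')) q' - Vfun c (Gw N' n' a' b') (n' * (a' + b')) q >=
  Fx c (n' * (a' + b')) (nth 0 (Gw N' n' a' b') q') q' -
  (if nth 0 (Gw N' n' a' b') q == nth 0 (Gw N' n' a' b') q' then 0 else (1 + c) * a'%:R).
Proof.
move=> Ha Hc Hb Hq Hq' Heq.
have Hqs : (q < size (Gw N' n' a' b'))%N by lia.
set v := Gw N' n' a' b' in Hq' Hqs *; set M' := (n' * (a' + b'))%N in Heq *.
have HM : (0 < M')%N.
  move: Hq'; rewrite size_G // -/M'; case: (posnP M') => [->|] //; rewrite addn0 muln0 //.
have Htau : forall y, Fx c M' y q = Fx c M' y q' by move=> y; rewrite /Fx /tau -/M' Heq.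
set x := nth 0 v q; set x' := nth 0 v q'.
have Fp := Fx_ge0 M' x' q' Hc.
have CS := Cq_step R x' HM Heq Hq Hq'.
rewrite -/v -/x' eqxx /= in CS.
rewrite /Vfun -/x -/x' -Heq.
case: eqP => Exx.
  rewrite Exx Htau subr0.
  have H := ler_wpM2l Fp CS; rewrite mulrDr mulr1 in H; lra.
have U := VUB Ha Hc Hb Hqs (letter_v12 Ha Hqs).
have Hor : (x' == tau M' q) || (0 < c) by rewrite /tau Heq; exact: tau_or Ha Hc Hb Hq'.
have L := VLB Ha Hc Hb Hqs (letter_v12 Ha Hq') Hor.
rewrite -/M' -/v -/x -/x' in U L.
have H := ler_wpM2l Fp CS; rewrite mulrDr mulr1 in H.
rewrite Htau in L; lra.
Qed.

Lemma LV_diff (R : realType) (c : R) N' n' a' b' q q' :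
  (0 < a')%N -> 0 <= c -> b'%:R = c * a'%:R -> (q < q')%N -> (q' < size (Gw N' n' a' b'))%N ->
  (q %/ (n' * (a' + b')) < q' %/ (n' * (a' + b')))%N ->
  Vfun c (Gw N' n' a' b') (n' * (a' + b')) q' - Vfun c (Gw N' n' a' b') (n' * (a' + b')) q >=
  Fx c (n' * (a' + b')) (nth 0 (Gw N' n' a' b') q') q' - c * a'%:R.
Proof.
move=> Ha Hc Hb Hq Hq' Hlt.
have Hqs : (q < size (Gw N' n' a' b'))%N by lia.
have U := VUB Ha Hc Hb Hqs (letter_v12 Ha Hqs).
set v := Gw N' n' a' b' in Hq' Hqs U *; set M' := (n' * (a' + b'))%N in Hlt U *.
have HM : (0 < M')%N.
  move: Hq'; rewrite size_G // -/M'; case: (posnP M') => [->|] //; rewrite addn0 muln0 //.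
have [Hr1 Hr2] := region_bounds q HM.
have Hr : (q.+1 <= q' %/ M' * M')%N.
  apply: leq_trans Hr2 _; rewrite -mulSnr leq_mul2r; apply/orP; right; exact: Hlt.
have Hr' : (q.+1)%:R <= (q' %/ M' * M')%:R :> R by rewrite ler_nat.
set x' := nth 0 v q'.
have Fp := Fx_ge0 M' x' q' Hc.
have CP := Cq_pos R x' HM Hq'; rewrite -/x' eqxx /= in CP.
have H := ler_wpM2l Fp CP; rewrite mulr1 in H.
rewrite /Vfun -/x'; lra.
Qed.

Lemma LF (R : realType) (c : R) N' n' a' b' q' :
  (0 < a')%N -> 0 <= c -> c ^+ 2 + 2 * c <= 1 -> b'%:R = c * a'%:R ->
  (q' < size (Gw N' n' a' b'))%N ->
  (if nth 0 (Gw N' n' a' b') q' == tau (n' * (a' + b'))%N q' then 2 else 0) +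
  Fx c (n' * (a' + b')) (nth 0 (Gw N' n' a' b') q') q' >= 3 + c.
Proof.
move=> Ha Hc Hc2 Hb Hq.
have := tau_or Ha Hc Hb Hq.
rewrite /Fx; case: ifP => _ /=; first by lra.
move=> Hcp.
rewrite add0r ler_pdivlMr //.
have -> : (3 + c) * c = 3 * c + c ^+ 2 by rewrite expr2; ring.
lra.
Qed.

Definition Zfun (R : realType) (c : R) M a' M' q : R := (2 * M%:R + c * a'%:R) * (q %/ M')%:R.
Definition Psi (R : realType) (c : R) u v M a b a' M' p q : R :=
  Ufun R u M' p q + Gfun c a b a' p + Vfun c v M' q + Zfun c M a' M' q.

Definition PsiG (R : realType) (c : R) N n a b N' n' a' b' p q : R :=
  Psi c (Gw N n a b) (Gw N' n' a' b') (n * (a + b)) a b a' (n' * (a' + b')) p q.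

Lemma step (R : realType) (c : R) N n a b N' n' a' b' p p' q q' :
  (0 < a)%N -> (0 < a')%N -> 0 <= c -> c ^+ 2 + 2 * c <= 1 -> b'%:R = c * a'%:R ->
  (p < p')%N -> (p' < size (Gw N n a b))%N -> (q < q')%N -> (q' < size (Gw N' n' a' b'))%N ->
  nth 0 (Gw N n a b) p = nth 0 (Gw N' n' a' b') q ->
  nth 0 (Gw N n a b) p' = nth 0 (Gw N' n' a' b') q' ->
  PsiG c N n a b N' n' a' b' p' q' - PsiG c N n a b N' n' a' b' p q >= 3 + c.
Proof.
move=> Ha Ha' Hc Hc2 Hb Hp Hp' Hq Hq' E1 E2.
have HU := LU R (n' * (a' + b')) q q' Ha Hp Hp'.
have HG := LG a' Ha Hc Hp Hp'.
have HF := LF Ha' Hc Hc2 Hb Hq'.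
rewrite E2 in HU; rewrite E1 E2 in HG.
have HM0 : 0 <= (n * (a + b))%:R :> R by [].
have Ha0 : 0 <= a'%:R :> R by [].
have Hca : 0 <= c * a'%:R by rewrite mulr_ge0.
have HM' : (0 < n' * (a' + b'))%N.
  move: Hq'; rewrite size_G //; case: (posnP (n' * (a' + b'))) => [->|] //; rewrite addn0 muln0 //.
have Hd : (q %/ (n' * (a' + b')) <= q' %/ (n' * (a' + b')))%N by apply: leq_div2r; lia.
rewrite /PsiG /Psi.
case: (ltngtP (q %/ (n' * (a' + b'))) (q' %/ (n' * (a' + b')))) Hd => // [Hlt|Heq] _.
  have HV := LV_diff Ha' Hc Hb Hq Hq' Hlt.
  have HZ : Zfun c (n * (a + b)) a' (n' * (a' + b')) q' - Zfun c (n * (a + b)) a' (n' * (a' + b')) q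
      >= 2 * (n * (a + b))%:R + c * a'%:R.
    have HW : 0 <= 2 * (n * (a + b))%:R + c * a'%:R :> R by lra.
    rewrite /Zfun -mulrBr -{1}[2 * _ + _]mulr1 ler_wpM2l //.
    by rewrite lerBrDr -(natrD R 1) ler_nat add1n.
  have HG0 : Gfun c a b a' p' - Gfun c a b a' p >= 0.
    apply: le_trans HG; case: ifP => _ //; apply: mulr_ge0 => //; lra.
  move: HU HF; case: ifP => _; case: ifP => _ HU HF; lra.
have HV := LV_same Ha' Hc Hb Hq Hq' Heq.
have HZ : Zfun c (n * (a + b)) a' (n' * (a' + b')) q' = Zfun c (n * (a + b)) a' (n' * (a' + b')) q.
  by rewrite /Zfun Heq.
rewrite Heq eqxx in HU.
move: HV HG; case: ifP => _ HV HG; move: HU HF; case: ifP => _ HU HF; lra.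
Qed.

Lemma chain (R : realType) (c : R) N n a b N' n' a' b' (I J : seq nat) p q :
  (0 < a)%N -> (0 < a')%N -> 0 <= c -> c ^+ 2 + 2 * c <= 1 -> b'%:R = c * a'%:R ->
  sorted ltn (p :: I) -> sorted ltn (q :: J) -> size I = size J ->
  all (fun k => k < size (Gw N n a b))%N (p :: I) ->
  all (fun k => k < size (Gw N' n' a' b'))%N (q :: J) ->
  map (nth 0 (Gw N n a b)) (p :: I) = map (nth 0 (Gw N' n' a' b')) (q :: J) ->
  PsiG c N n a b N' n' a' b' (last p I) (last q J) - PsiG c N n a b N' n' a' b' p q
    >= (3 + c) * (size I)%:R.
Proof.
move=> Ha Ha' Hc Hc2 Hb.
elim: I J p q => [|p' I IH] [|q' J] p q //=.
- by move=> *; rewrite subrr mulr0.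
- move=> /andP [Hpp' HsI] /andP [Hqq' HsJ] [HIJ] /andP [Hp /andP [Hp' HaI]]
    /andP [Hq /andP [Hq' HaJ]] [E1 E2 Em].
  have H1 := step Ha Ha' Hc Hc2 Hb Hpp' Hp' Hqq' Hq' E1 E2.
  have H2 := IH J p' q' HsI HsJ HIJ (introT andP (conj Hp' HaI)) (introT andP (conj Hq' HaJ))
    (congr2 cons E2 Em).
  rewrite /= in H2.
  have Hs : ((size I).+1)%:R = (size I)%:R + 1 :> R by rewrite -natr1.
  rewrite Hs; lra.
Qed.

Lemma Dp_bound (R : realType) N n a b p : (0 < a)%N -> (p < size (Gw N n a b))%N ->
  `|sgn R (n * (a + b)) 0 * 0| = 0 /\
  (forall s : R, (s = 1 \/ s = -1) -> s * Dp R (Gw N n a b) p <= (n * (a + b))%:R).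
Proof.
move=> Ha Hp; split; first by rewrite mulr0 normr0.
have [D1 D2] := Dbound Ha Hp.
move=> s Hs.
have D1' : (count (pred1 1%N) (take p.+1 (Gw N n a b)))%:R <= (count (pred1 2%N) (take p.+1 (Gw N n a b)))%:R + (n * (a + b))%:R :> R
  by rewrite -natrD ler_nat.
have D2' : (count (pred1 2%N) (take p.+1 (Gw N n a b)))%:R <= (count (pred1 1%N) (take p.+1 (Gw N n a b)))%:R + (n * (a + b))%:R :> R
  by rewrite -natrD ler_nat.
rewrite /Dp /cntR; case: Hs => ->; lra.
Qed.

Lemma Psi_upper (R : realType) (c : R) N n a b N' n' a' b' p1 pn q1 qn :
  (0 < a)%N -> (0 < a')%N -> 0 <= c -> b'%:R = c * a'%:R ->
  (p1 <= pn)%N -> (pn < size (Gw N n a b))%N -> (q1 <= qn)%N -> (qn < size (Gw N' n' a' b'))%N ->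
  PsiG c N n a b N' n' a' b' pn qn - PsiG c N n a b N' n' a' b' p1 q1 <=
  (pn%:R - p1%:R) + 2 * (n * (a + b))%:R +
  (1 + c) * a'%:R * ((gidx a b pn)%:R - (gidx a b p1)%:R) + (qn%:R - q1%:R) + (1 + c) * a'%:R +
  (2 * (n * (a + b))%:R + c * a'%:R) *
    ((qn %/ (n' * (a' + b')))%:R - (q1 %/ (n' * (a' + b')))%:R).
Proof.
move=> Ha Ha' Hc Hb Hp Hpn Hq Hqn.
have Hp1 : (p1 < size (Gw N n a b))%N by lia.
have Hq1 : (q1 < size (Gw N' n' a' b'))%N by lia.
have [_ Dn] := Dp_bound R Ha Hpn.
have [_ D1] := Dp_bound R Ha Hp1.
have U := VUB Ha' Hc Hb Hqn (letter_v12 Ha' Hqn).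
have L := VLB Ha' Hc Hb Hq1 (letter_v12 Ha' Hq1) (tau_or Ha' Hc Hb Hq1).
rewrite /PsiG /Psi /Ufun /Gfun /Vfun /Zfun.
have Sn : sgn R (n' * (a' + b')) qn = 1 \/ sgn R (n' * (a' + b')) qn = -1.
  by rewrite /sgn; case: (odd _); [right|left].
have S1 : - sgn R (n' * (a' + b')) q1 = 1 \/ - sgn R (n' * (a' + b')) q1 = -1.
  by rewrite /sgn; case: (odd _); [left; rewrite opprK|right].
have H1 := Dn _ Sn; have H2 := D1 _ S1.
rewrite mulNr in H2.
have Ep : (pn.+1)%:R - (p1.+1)%:R = pn%:R - p1%:R :> R by rewrite -!natr1; ring.
have Ha0 : 0 <= a'%:R :> R by [].
have Hca : 0 <= c * a'%:R by rewrite mulr_ge0.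
have Eqn : (qn.+1)%:R = qn%:R + 1 :> R by rewrite -natr1.
have Eq1 : (q1.+1)%:R = q1%:R + 1 :> R by rewrite -natr1.
lra.
Qed.

Lemma sorted_last_ge (x : nat) s : sorted ltn (x :: s) -> (x <= last x s)%N.
Proof.
elim: s x => //= y s IH x /andP [Hxy Hs].
exact: leq_trans (ltnW Hxy) (IH y Hs).
Qed.

Lemma gidx_bound (R : realType) a b p1 pn : (0 < a + b)%N -> (p1 <= pn)%N ->
  ((gidx a b pn)%:R - (gidx a b p1)%:R) * (a + b)%:R <= 2 * (pn%:R - p1%:R) + 3 * (a + b)%:R :> R.
Proof.
move=> Hab Hp.
have E1 := leq_divM pn (a + b).
have E2 := ltn_ceil p1 Hab.
have G1 : (gidx a b pn <= 2 * (pn %/ (a + b)) + 1)%N by rewrite /gidx leq_add2l leq_b1.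
have G2 : (2 * (p1 %/ (a + b)) <= gidx a b p1)%N by rewrite /gidx leq_addr.
have E1' : (pn %/ (a + b))%:R * (a + b)%:R <= pn%:R :> R by rewrite -natrM ler_nat.
have E2' : p1%:R + 1 <= (p1 %/ (a + b))%:R * (a + b)%:R + (a + b)%:R :> R.
  by rewrite natr1 -natrM -natrD ler_nat; move: E2; rewrite mulSn; lia.
have G1' : (gidx a b pn)%:R <= 2 * (pn %/ (a + b))%:R + 1 :> R.
  by move: G1; rewrite -(ler_nat R) natrD natrM.
have G2' : 2 * (p1 %/ (a + b))%:R <= (gidx a b p1)%:R :> R.
  by move: G2; rewrite -(ler_nat R) natrM.
have H : (gidx a b pn)%:R - (gidx a b p1)%:R <= 2 * ((pn %/ (a + b))%:R - (p1 %/ (a + b))%:R) + 1 :> R.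
  lra.
have Hp0 : 0 <= (a + b)%:R :> R by [].
have H2 := ler_wpM2r Hp0 H.
lra.
Qed.

Lemma gmix (R : realType) (c A A' G D r P : R) : 0 <= c -> 0 < A -> 0 <= A' -> 0 <= D -> 0 < r ->
  A' * r <= A -> P = (1 + c) * A -> G * P <= 2 * D + 3 * P ->
  (1 + c) * A' * G <= 2 / r * D + 3 * ((1 + c) * A').
Proof.
move=> Hc HA HA' HD Hr Har EP HG.
rewrite -(ler_pM2l HA).
have e1 : A * ((1 + c) * A' * G) = A' * (G * P) by rewrite EP; ring.
have e2 : A * (2 / r * D + 3 * ((1 + c) * A')) = 2 * (D * (A / r)) + 3 * (A' * P).
  by rewrite EP; ring.
rewrite e1 e2.
have h1 := ler_wpM2l HA' HG.
have h2 : A' <= A / r by rewrite ler_pdivlMr.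
have h3 := ler_wpM2l HD h2.
lra.
Qed.

Lemma natpow_facts (K r i j : nat) : (1 <= K)%N -> (10 <= r)%N -> (1 <= i)%N -> (i < j)%N -> (j <= K)%N ->
  [/\ (10 * r ^ (K - j) <= r ^ (2 * K))%N, (100 * (r ^ (K - j) * r ^ (K - j)) <= r ^ (2 * K))%N,
      (r ^ (K + 1 + i) * r ^ (K - j) <= r ^ (2 * K))%N & (100 <= r ^ (2 * K))%N].
Proof.
move=> HK Hr Hi Hij HjK.
have Hr0 : (0 < r)%N by lia.
have Hrr : (100 <= r * r)%N by nia.
split.
- apply: (@leq_trans (r * r ^ (K - j))); first by rewrite leq_mul2r; apply/orP; right.
  rewrite -expnS; apply: leq_pexp2l => //; lia.
- apply: (@leq_trans (r * r * (r ^ (K - j) * r ^ (K - j)))); first by rewrite leq_mul2r Hrr orbT.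
  have -> : (r * r * (r ^ (K - j) * r ^ (K - j)) = r ^ (K - j + (K - j) + 2))%N.
    by rewrite !expnD (expnS r 1) expn1; nia.
  apply: leq_pexp2l => //; lia.
- by rewrite -expnD; apply: leq_pexp2l => //; lia.
- apply: leq_trans Hrr _; rewrite -(expn1 r) -expnD; apply: leq_pexp2l => //; lia.
Qed.

Theorem lemma3p8 (Rt : realType) (c : Rt) (K t r i j bi bj : nat) (I J : seq nat) :
  0 <= c -> c < Num.sqrt 2 - 1 ->
  (1 <= K)%N -> (0 < t)%N ->
  r%:R = (1 + c) * t%:R -> (10 <= r)%N ->
  (1 <= i)%N -> (i < j)%N -> (j <= K)%N ->
  c * (r ^ (K - i))%:R = bi%:R ->
  c * (r ^ (K - j))%:R = bj%:R ->
  common_subseq (gword r K i bi) (gword r K j bj) I J ->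
  (1 + 2 / r%:R) * (wspan I)%:R + (wspan J)%:R
    >= (3 + c) * (size I)%:R - 10 * (r ^ (2 * K + 1))%:R / r%:R.
Proof.
move=> Hc Hcs HK Ht Hr Hr10 Hi Hij HjK Hbi Hbj [HsI HsJ HIJ [HaI HaJ Hmap]].
have Hr0 : (0 < r)%N by lia.
have Hc2 : c ^+ 2 + 2 * c <= 1.
  have Hs0 := sqrtr_ge0 (2 : Rt).
  have Hs2 : Num.sqrt (2 : Rt) ^+ 2 = 2 by rewrite sqr_sqrtr.
  have H1 : 1 + c < Num.sqrt 2 by lra.
  rewrite expr2 in Hs2 *; nra.
set a := (r ^ (K - i))%N; set a' := (r ^ (K - j))%N.
set n := (t * r ^ (2 * i))%N; set n' := (t * r ^ (2 * j))%N.
have Ha : (0 < a)%N by rewrite expn_gt0 Hr0.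
have Ha' : (0 < a')%N by rewrite expn_gt0 Hr0.
have Habt : forall (l bl : nat), c * (r ^ (K - l))%:R = bl%:R -> ((r ^ (K - l) + bl) * t = r ^ (K - l) * r)%N.
  move=> l bl Hbl; apply/eqP; rewrite -(eqr_nat Rt) !natrM natrD -Hbl Hr; apply/eqP; ring.
have HM : forall (l bl : nat), (l <= K)%N -> c * (r ^ (K - l))%:R = bl%:R ->
    ((t * r ^ (2 * l)) * (r ^ (K - l) + bl) = r ^ (K + 1 + l))%N.
  move=> l bl HlK Hbl.
  have -> : (t * r ^ (2 * l) * (r ^ (K - l) + bl) = (r ^ (K - l) + bl) * t * r ^ (2 * l))%N by lia.
  rewrite (Habt l bl Hbl).
  by rewrite -expnSr -expnD; congr (expn r _); lia.
have HN : forall l, (l <= K)%N -> (r ^ (2 * K + 1) %/ r ^ (K + 1 + l) = r ^ (K - l))%N.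
  move=> l HlK; have -> : (r ^ (2 * K + 1) = r ^ (K - l) * r ^ (K + 1 + l))%N.
    by rewrite -expnD; congr (expn r _); lia.
  by rewrite mulnK // expn_gt0 Hr0.
have Hgw : forall (l bl : nat), (l <= K)%N -> c * (r ^ (K - l))%:R = bl%:R ->
    gword r K l bl = Gw (r ^ (K - l)) (t * r ^ (2 * l)) (r ^ (K - l)) bl.
  move=> l bl HlK Hbl.
  change (gword r K l bl) with (flatten (nseq (r ^ (2 * K + 1) %/ r ^ (K + 1 + l))
    (word1 (r ^ (K + 1 + l)) (r ^ (K - l)) bl ++ word2 (r ^ (K + 1 + l)) (r ^ (K - l)) bl))).
  by rewrite HN // -(HM l bl HlK Hbl).
have HiK : (i <= K)%N by lia.
rewrite (Hgw i bi HiK Hbi) (Hgw j bj HjK Hbj) -/a -/a' -/n -/n' in HaI HaJ Hmap.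
have Hbj' : bj%:R = c * a'%:R by rewrite Hbj.
have Hbi' : bi%:R = c * a%:R by rewrite Hbi.
set X := (r ^ (2 * K))%N.
have HL : 10 * (r ^ (2 * K + 1))%:R / r%:R = 10 * X%:R :> Rt.
  rewrite /X addn1 expnSr natrM mulrA mulfK //; by rewrite pnatr_eq0 -lt0n.
have HX0 : 0 <= X%:R :> Rt by [].
have Hrpos : 0 < r%:R :> Rt by rewrite ltr0n.
have H2r : 0 <= 2 / r%:R :> Rt by rewrite divr_ge0 // ler0n.
rewrite HL.
case: I HsI HIJ HaI Hmap => [|p1 I'] HsI HIJ HaI Hmap.
  rewrite /= mulr0; have : 0 <= (wspan J)%:R :> Rt by []; lra.
case: J HsJ HIJ HaJ Hmap => [|q1 J'] // HsJ HIJ HaJ Hmap.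
have HIJ' : size I' = size J' by case: HIJ.
have Hch := chain Ha Ha' Hc Hc2 Hbj' HsI HsJ HIJ' HaI HaJ Hmap.
set pn := last p1 I' in Hch *; set qn := last q1 J' in Hch *.
have Hp1n : (p1 <= pn)%N by apply: sorted_last_ge.
have Hq1n : (q1 <= qn)%N by apply: sorted_last_ge.
have Hpn : (pn < size (Gw a n a bi))%N by move/allP: HaI; apply; exact: mem_last.
have Hqn : (qn < size (Gw a' n' a' bj))%N by move/allP: HaJ; apply; exact: mem_last.
have Hup := Psi_upper Ha Ha' Hc Hbj' Hp1n Hpn Hq1n Hqn.
have Hab : (0 < a + bi)%N by rewrite addn_gt0 Ha.
have Hgb := gidx_bound Rt Hab Hp1n.
have Har : a'%:R * r%:R <= a%:R :> Rt.
  rewrite -natrM ler_nat /a /a' -expnSr; apply: leq_pexp2l => //; clear -Hij HjK; lia.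
have EP : (a + bi)%:R = (1 + c) * a%:R :> Rt by rewrite natrD Hbi'; ring.
have HD0 : 0 <= pn%:R - p1%:R :> Rt by rewrite subr_ge0 ler_nat.
have HA : 0 < a%:R :> Rt by rewrite ltr0n.
have HA' : 0 <= a'%:R :> Rt by [].
have Hgm := gmix Hc HA HA' HD0 Hrpos Har EP Hgb.
set W := 2 * (n * (a + bi))%:R + c * a'%:R.
have Hca : 0 <= c * a'%:R by rewrite mulr_ge0.
have HW0 : 0 <= W by rewrite /W addr_ge0 // mulr_ge0.
have HM' : (0 < n' * (a' + bj))%N.
  rewrite muln_gt0 addn_gt0 Ha' /n' muln_gt0 Ht expn_gt0 Hr0 //.
have zq : (qn %/ (n' * (a' + bj)))%:R - (q1 %/ (n' * (a' + bj)))%:R <= 2 * a'%:R - 1 :> Rt.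
  have Hz : ((qn %/ (n' * (a' + bj))).+1 <= 2 * a')%N.
    rewrite ltn_divLR //; move: Hqn; rewrite size_G //.
    move: (n' * (a' + bj))%N => m; clear; nia.
  have Hz' : (qn %/ (n' * (a' + bj)))%:R + 1 <= 2 * a'%:R :> Rt.
    by rewrite natr1 -(natrM Rt 2 a') ler_nat.
  have : 0 <= (q1 %/ (n' * (a' + bj)))%:R :> Rt by [].
  lra.
have HZb := ler_wpM2l HW0 zq.
have [N1 N2 N3 N4] := natpow_facts HK Hr10 Hi Hij HjK.
rewrite -/a' -/X in N1 N2 N3 N4.
rewrite -(HM i bi HiK Hbi) -/a -/n in N3.
have R1 : 10 * a'%:R <= X%:R :> Rt by rewrite -(natrM Rt 10 a') ler_nat.
have R2 : 100 * (a'%:R * a'%:R) <= X%:R :> Rt by rewrite -natrM -(natrM Rt 100) ler_nat.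
have R3 : (n * (a + bi))%:R * a'%:R <= X%:R :> Rt by rewrite -natrM ler_nat.
have R4 : 100 <= X%:R :> Rt by rewrite ler_nat.
have Hcsq : 0 <= c ^+ 2 by rewrite sqr_ge0.
have Hc1 : c <= 1 / 2 by lra.
have Hca1 : c * a'%:R <= a'%:R by rewrite -{2}[a'%:R]mul1r ler_wpM2r //; lra.
have Hcaa : c * a'%:R * a'%:R <= a'%:R * a'%:R by rewrite ler_wpM2r.
have Hws : (wspan (p1 :: I'))%:R = pn%:R - p1%:R + 1 :> Rt.
  by rewrite /= -/pn -natr1 natrB.
have Hwt : (wspan (q1 :: J'))%:R = qn%:R - q1%:R + 1 :> Rt.
  by rewrite /= -/qn -natr1 natrB.
have Hsz : (size (p1 :: I'))%:R = (size I')%:R + 1 :> Rt by rewrite /= -natr1.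
have HM0 : 0 <= (n * (a + bi))%:R :> Rt by [].
rewrite Hws Hwt Hsz.
rewrite /W in HZb.
lra.
Qed.
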